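(* Let $n\ge0$ and $r\ge0$ be integers, $x=(x_1,\dots,x_n)$ and $x_0=0$. Then $$\sum_{\substack{\lambda:\ l(\lambda)=r\\ \lambda_1\le n}}\ \prod_{j=1}^n\frac{1}{m_j!}\prod_{i=1}^r(n-\lambda_i-i+2)(x_{\lambda_i}-x_{\lambda_i-1})=e_r(x),$$ where the sum is over partitions $\lambda$ with exactly $r$ nonzero parts, all at most $n$, and $m_j$ is the multiplicity of the part $j$ in $\lambda$.
   Context: $e_r(x)=\sum_{1\le i_1<\cdots<i_r\le n}x_{i_1}\cdots x_{i_r}$ is the $r$th elementary symmetric polynomial ($e_0=1$, $e_r=0$ for $r>n$). $l(\lambda)$ is the number of nonzero parts of $\lambda$. *)

(* Defs.v *)
From HB Require Import structures.
From mathcomp Require Import all_boot all_order all_algebra.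
Set Implicit Arguments. Unset Strict Implicit. Unset Printing Implicit Defensive.
Import Order.TTheory GRing.Theory Num.Theory.
Local Open Scope ring_scope.

(* Elementary symmetric polynomial e_r evaluated at (x 1, ..., x n):
   sum over r-element subsets S of {1..n} (encoded as subsets of 'I_n,
   index i standing for i+1) of prod_{i in S} x_(i+1). *)
Definition elem_sym (R : comNzRingType) (n r : nat) (x : nat -> R) : R :=
  \sum_(S : {set 'I_n} | #|S| == r) \prod_(i in S) x i.+1.

(* A partition with exactly r nonzero parts, all at most n, encoded as
   lam : 'I_r -> 'I_n.+1 with lam i = lambda_(i+1): all parts nonzero and
   weakly decreasing. *)
Definition is_part_rn (n r : nat) (lam : {ffun 'I_r -> 'I_n.+1}) : bool :=
  [forall i, (0 < val (lam i))%N] &&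
  [forall i, forall j, (val i <= val j)%N ==> (val (lam j) <= val (lam i))%N].

Definition mult_part (n r : nat) (lam : {ffun 'I_r -> 'I_n.+1}) (j : nat) : nat :=
  #|[set i | val (lam i) == j]|.

(* Main.v *)
Require Import Defs.
From HB Require Import structures.
From mathcomp Require Import all_boot all_order all_algebra.
Import Order.TTheory GRing.Theory Num.Theory.
Local Open Scope ring_scope.
Section Comb.
Local Open Scope nat_scope.

Fixpoint parts (k r : nat) : seq (seq nat) :=
  if k is k'.+1 then
    flatten [seq [seq nseq m k ++ s | s <- parts k' (r - m)] | m <- iota 0 r.+1]
  else if r == 0 then [:: [::]] else [::].

Definition good (k r : nat) (s : seq nat) :=
  [&& size s == r, sorted geq s & all (fun v => 0 < v <= k) s].

Lemma geq_tr : transitive geq.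
Proof. by move=> a b c h1 h2; exact: leq_trans h2 h1. Qed.

Lemma sorted_nseq_cat m c s : sorted geq s -> all (fun v => v <= c) s ->
  sorted geq (nseq m c ++ s).
Proof.
move=> ss as_; elim: m => [//|m IH] /=.
rewrite (path_sortedE geq_tr) IH andbT all_cat all_nseq.
by rewrite /= leqnn orbT.


Qed.

Lemma decomp k s : sorted geq s -> all (fun v => 0 < v <= k.+1) s ->
  exists m s', s = nseq m k.+1 ++ s' /\ sorted geq s' /\ all (fun v => 0 < v <= k) s'.
Proof.
elim: s => [|h t IH]; first by move=> _ _; exists 0, [::].
move=> /= pt /andP [/andP [h0 hk] at_].
have st : sorted geq t by apply: path_sorted pt.
have [eh|nh] := eqVneq h k.+1.
  have [m [s' [-> [ss' as']]]] := IH st at_.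
  by exists m.+1, s'; rewrite eh.
exists 0, (h :: t); split => //; split => //=.
have hk' : h <= k by rewrite -ltnS ltn_neqAle nh hk.
rewrite h0 hk' /=.
move: pt; rewrite (path_sortedE geq_tr) => /andP [ah _].
apply/allP => v vt; move/allP: ah => /(_ v vt) /= vh.
move/allP: at_ => /(_ v vt) /andP [v0 _].
by rewrite v0 (leq_trans vh hk').
Qed.

Lemma mem_parts k r s : (s \in parts k r) = good k r s.
Proof.
elim: k r s => [|k IH] r s.
  rewrite /=; case: r => [|r] /=; case: s => [|h t] //=; rewrite ?inE // /good /=.
  by case: h => [|h]; rewrite /= ?andbF.
apply/idP/idP.
  move/flattenP => [ss /mapP [m mr ->] /mapP [s' s'p ->]].
  move: s'p; rewrite IH => /and3P [/eqP sz srt al].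
  move: mr; rewrite mem_iota add0n ltnS => /= mr.
  apply/and3P; split.
  - by rewrite size_cat size_nseq sz subnKC.
  - apply: sorted_nseq_cat => //; apply/allP => v vs.
    by move/allP: al => /(_ v vs) /andP [_ /leq_trans -> //].
  - rewrite all_cat all_nseq ltnSn /= orbT /=.
    apply/allP => v vs; move/allP: al => /(_ v vs) /andP [-> /leq_trans ->] //.
move=> /and3P [/eqP sz srt al].
have [m [s' [es [ss' as']]]] := @decomp k s srt al.
apply/flattenP; exists [seq nseq m k.+1 ++ s0 | s0 <- parts k (r - m)].
  apply/mapP; exists m => //; rewrite mem_iota add0n ltnS -sz es size_cat size_nseq.
  exact: leq_addr.
apply/mapP; exists s' => //; rewrite IH; apply/and3P; split => //.
by rewrite -sz es size_cat size_nseq addKn.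
Qed.

Lemma catlI (p : seq nat) : injective (cat p).
Proof. by elim: p => //= a p IH s1 s2 [] /IH. Qed.

Lemma uniq_flatten_tag (T : eqType) (l : seq nat) (f : nat -> seq T) (t : T -> nat) :
  uniq l -> (forall m, uniq (f m)) -> (forall m x, x \in f m -> t x = m) ->
  uniq (flatten (map f l)).
Proof.
move=> ul uf tf; elim: l ul => //= a l IH /andP [al ul].
rewrite cat_uniq uf IH // andbT.
apply/hasPn => x /flattenP [ss /mapP [b bl ->]] xb; apply/negP => xa.
by move: al; rewrite -(tf _ _ xa) (tf _ _ xb) bl.
Qed.

Lemma uniq_parts k r : uniq (parts k r).
Proof.
elim: k r => [|k IH] r; first by case: r.
apply: (@uniq_flatten_tag _ _ (fun m => [seq nseq m k.+1 ++ s | s <- parts k (r - m)]) (fun s => count_mem k.+1 s)).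
- exact: iota_uniq.
- by move=> m; rewrite map_inj_uniq //; exact: catlI.
move=> m x /mapP [s' s'p ->].
rewrite count_cat count_nseq /= eqxx mul1n.
have -> : count_mem k.+1 s' = 0.
  apply/count_memPn; apply/negP => ks.
  move: s'p; rewrite mem_parts => /and3P [_ _ /allP /(_ _ ks) /andP [_]].
  by rewrite ltnn.
by rewrite addn0.
Qed.
End Comb.
Local Open Scope ring_scope.
Section P1.
Variable R : numFieldType.

Definition PL (l : seq R) : {poly R} := \prod_(c <- l) (c *: 'X + 1).
Definition EE (l : seq R) (r : nat) : R := (PL l)`_r.

Lemma elem_E (n r : nat) (x : nat -> R) :
  elem_sym n r x = EE (map x (iota 1 n)) r.
Proof.
rewrite /EE /PL big_map.
have -> : \prod_(j <- iota 1 n) (x j *: 'X + 1) = \prod_(i < n) (x i.+1 *: 'X + 1).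
  have -> : iota 1 n = index_iota 1 n.+1 by rewrite /index_iota subSS subn0.
  by rewrite big_add1 /= big_mkord.
rewrite bigA_distr coef_sum /elem_sym big_mkcond.
apply: eq_bigr => J _.
rewrite -big_mkcond scaler_prodr coefZ coefXn.
by rewrite eq_sym; case: ifP => _; rewrite ?mulr1 ?mulr0.
Qed.

Lemma sum_ext (n N : nat) (F : nat -> R) : (n <= N)%N ->
  (forall i, (n <= i)%N -> (i < N)%N -> F i = 0) ->
  \sum_(i < n) F i = \sum_(i < N) F i.
Proof.
move=> nN h; rewrite (big_ord_widen N F nN) big_mkcond; apply: eq_bigr => i _.
by case: ifP => // /negbT; rewrite -leqNgt => ni; rewrite h.
Qed.

Lemma prod_nseq (F : R -> {poly R}) k v : \prod_(c <- nseq k v) F c = F v ^+ k.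
Proof. by elim: k => [|k IH]; rewrite ?big_nil ?expr0 // big_cons IH exprS. Qed.

Lemma key (L : seq R) (c r : nat) (u y : R) :
  EE (L ++ nseq c (u + y)) r =
  \sum_(m < r.+1) ('C(c, m))%:R * y ^+ m * EE (L ++ nseq (c - m) u) (r - m).
Proof.
rewrite /EE /PL big_cat /= prod_nseq.
have -> : (u + y) *: 'X + 1 = (u *: 'X + 1) + y *: ('X : {poly R}).
  by rewrite scalerDl addrAC.
rewrite exprDn mulr_sumr coef_sum.
pose F i := ('C(c, i))%:R * y ^+ i *
   (if (r < i)%N then 0 else (\prod_(c0 <- L) (c0 *: 'X + 1) * (u *: 'X + 1) ^+ (c - i))`_(r - i)).
transitivity (\sum_(i < c.+1) F i).
  apply: eq_bigr => i _; rewrite /F exprZn mulrnAr coefMn -!scalerAr mulrA coefZ coefMXn.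
  by rewrite -[LHS]mulr_natl mulrA [_ * y ^+ i]mulrC.
rewrite (@sum_ext _ (c + r).+1); last 2 first.
- by rewrite ltnS leq_addr.
- by move=> i ci _; rewrite /F bin_small // mul0r mul0r.
rewrite -(@sum_ext r.+1 (c + r).+1); last 2 first.
- by rewrite ltnS leq_addl.
- by move=> i ri _; rewrite /F ri mulr0.
apply: eq_bigr => i _; rewrite /F ltnNge -ltnS ltn_ord /= big_cat /= prod_nseq.
by [].
Qed.

Variables (n : nat) (x : nat -> R).
Definition y j := x j - x j.-1.

Fixpoint ordf (al : R) (s : seq nat) : R :=
  if s is h :: t then (al - h%:R + 1) * y h * ordf (al - 1) t else 1.

Definition wt (s : seq nat) : R := \prod_(1 <= j < n.+1) ((count_mem j s)`!%:R)^-1.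

Definition G (al : R) (k r : nat) : R := \sum_(s <- parts k r) wt s * ordf al s.

Lemma ordf_nseq al m c s : ordf al (nseq m c ++ s) =
  (\prod_(i < m) (al - i%:R - c%:R + 1)) * y c ^+ m * ordf (al - m%:R) s.
Proof.
elim: m al => [|m IH] al /=; first by rewrite big_ord0 subr0 !mul1r.
rewrite IH big_ord_recl /= subr0 exprS !mulrA; congr (_ * _ * _).
- rewrite -!mulrA; congr (_ * _); rewrite mulrC; congr (_ * _).
  by apply: eq_bigr => i _; rewrite /bump /= add1n mulrSr opprD addrA [al - 1 - _]addrAC.
- by rewrite mulrSr opprD addrA [al - 1 - _]addrAC.
Qed.

Lemma wt_nseq m k s : (k < n)%N -> all (fun v => 0 < v <= k)%N s ->
  wt (nseq m k.+1 ++ s) = (m`!%:R)^-1 * wt s.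
Proof.
move=> kn als; rewrite /wt.
have eq j : ((count_mem j (nseq m k.+1 ++ s))`!%:R)^-1 =
   (if j == k.+1 then (m`!%:R)^-1 else 1) * ((count_mem j s)`!%:R : R)^-1.
  rewrite count_cat count_nseq /=.
  have [->|nj] := eqVneq j k.+1.
    have -> : count_mem k.+1 s = 0%N.
      apply/count_memPn; apply/negP => ks.
      by move/allP: als => /(_ _ ks) /andP [_]; rewrite ltnn.
    by rewrite mul1n addn0 invr1 mulr1.
  by rewrite mul0n add0n mul1r.
under eq_bigr do rewrite eq.
rewrite big_split /=; congr (_ * _).
rewrite (bigD1_seq k.+1) /=; last 2 first.
- by rewrite mem_index_iota; apply/andP; split => //; rewrite ltnS; exact: ltnW.
- exact: iota_uniq.
by rewrite eqxx big1 ?mulr1 // => j /negbTE ->.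
Qed.

Lemma G_rec al k r : (k < n)%N ->
  G al k.+1 r = \sum_(m < r.+1) (m`!%:R)^-1 *
    (\prod_(i < m) (al - i%:R - k.+1%:R + 1)) * y k.+1 ^+ m * G (al - m%:R) k (r - m).
Proof.
move=> kn; rewrite /G.
have -> : parts k.+1 r = flatten [seq [seq nseq m k.+1 ++ s | s <- parts k (r - m)] | m <- index_iota 0 r.+1] by [].
rewrite big_flatten big_map big_mkord.
apply: eq_bigr => m _; rewrite big_map mulr_sumr big_seq [RHS]big_seq.
apply: eq_bigr => s; rewrite mem_parts => /and3P [_ _ als].
rewrite wt_nseq // ordf_nseq.
rewrite -!mulrA; congr (_ * _); rewrite mulrCA; congr (_ * _).
by rewrite mulrCA.
Qed.

Lemma Gmain (hx0 : x 0 = 0) k : (k <= n)%N -> forall a r, (k <= a)%N ->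
  G a%:R k r = EE (map x (iota 1 k) ++ nseq (a - k) (x k)) r.
Proof.
elim: k => [|k IH] kn a r ka.
  rewrite /G /EE /PL /= subn0 hx0 prod_nseq scale0r add0r expr1n coef1.
  case: r => [|r] /=; last by rewrite big_nil.
  rewrite big_cons big_nil addr0 mulr1 /wt big1 // => j _.
  by rewrite /= invr1.
rewrite G_rec //.
have -> : map x (iota 1 k.+1) ++ nseq (a - k.+1) (x k.+1) =
          map x (iota 1 k) ++ nseq (a - k) (x k + y k.+1).
  rewrite /y (_ : k.+1.-1 = k) // addrC subrK.
  have -> : iota 1 k.+1 = iota 1 k ++ [:: k.+1] by have := iotaD 1 k 1; rewrite addn1 add1n.
  by rewrite map_cat -catA -(subnSK ka).
rewrite key; apply: eq_bigr => m _.
have [mak|amk] := leqP m (a - k).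
  have ma : (m <= a)%N by apply: leq_trans mak (leq_subr _ _).
  have kam : (k <= a - m)%N by rewrite leq_subRL // addnC -leq_subRL // (leq_trans (leqnSn k) ka).
  rewrite -natrB // IH ?(ltnW kn) //.
  rewrite subnAC; congr (_ * _ * _).
  have -> : \prod_(i < m) (a%:R - i%:R - k.+1%:R + 1) = (\prod_(i < m) (a - k - i)%N)%:R :> R.
    rewrite natr_prod; apply: eq_bigr => i _.
    have ik : (i <= a - k)%N by apply: leq_trans (ltnW (ltn_ord i)) mak.
    rewrite natrB // natrB; last by apply: leq_trans ka; apply: leqnSn.
    by rewrite mulrSr opprD addrA subrK addrAC.
  rewrite -ffact_prod -bin_ffact natrM mulrC mulfK //.
  by rewrite pnatr_eq0 -lt0n fact_gt0.
rewrite bin_small // !mul0r.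
have -> : \prod_(i < m) (a%:R - i%:R - k.+1%:R + 1) = 0 :> R.
  rewrite (bigD1 (Ordinal amk)) //= natrB; last by apply: leq_trans ka; apply: leqnSn.
  by rewrite opprB addrC [a%:R + _]addrC subrK mulrSr addrA [1 + _]addrC subrr mul0r.
by rewrite mulr0 !mul0r.
Qed.

Lemma ordf_mkseq al f r : ordf al (mkseq f r) =
  \prod_(i < r) ((al - (f i)%:R - (i.+1)%:R + 2%:R) * (x (f i) - x (f i).-1)).
Proof.
elim: r al f => [|r IH] al f; first by rewrite big_ord0.
have -> : mkseq f r.+1 = f 0%N :: mkseq (fun i => f i.+1) r.
  by rewrite /mkseq /= -[1%N]/(1 + 0)%N iotaDl -map_comp.
rewrite /= IH big_ord_recl /= /y; congr (_ * _).
  by congr (_ * _); rewrite -[RHS]addrA mulr2n addKr.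
apply: eq_bigr => i _; congr (_ * _); rewrite /bump /= add1n.
congr (_ + _); rewrite [in RHS]mulrSr opprD addrA [al - 1 - _]addrAC.
by rewrite [LHS]addrAC.
Qed.

Lemma count_sum (T : eqType) (p : pred T) (s : seq T) : count p s = (\sum_(i <- s) p i)%N.
Proof. by elim: s => [|a s IH]; rewrite ?big_nil // big_cons /= IH. Qed.

Section Bridge.
Variable r : nat.
Definition lf (lam : {ffun 'I_r -> 'I_n.+1}) (i : nat) : nat :=
  if (insub i : option 'I_r) is Some j then val (lam j) else 0%N.
Definition tl lam := mkseq (lf lam) r.

Lemma lfE lam (j : 'I_r) : lf lam j = val (lam j).
Proof. by rewrite /lf valK. Qed.

Lemma nth_tl lam (j : 'I_r) : nth 0%N (tl lam) j = val (lam j).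
Proof. by rewrite nth_mkseq // lfE. Qed.

Lemma mult_tl lam j : mult_part lam j = count_mem j (tl lam).
Proof.
rewrite /mult_part /tl count_map count_sum.
have -> : iota 0 r = index_iota 0 r by rewrite /index_iota subn0.
rewrite big_mkord.
rewrite cardsE -sum1_card big_mkcond /=; apply: eq_bigr => i _.
rewrite lfE unfold_in /=.
by case: ifP => [/eqnP -> | /negbT /eqnP h]; [rewrite eqxx | apply/esym/eqP; rewrite eqb0; apply/eqP].
Qed.

Lemma tl_inj : injective tl.
Proof.
move=> l1 l2 e; apply/ffunP => i; apply/val_inj.
by rewrite -!nth_tl e.
Qed.

Lemma mem_tl s : (s \in map tl (filter (@is_part_rn n r) (index_enum _))) = good n r s.
Proof.
apply/idP/idP.
  move/mapP => [lam]; rewrite mem_filter => /andP [/andP [/forallP pos /forallP dec] _] ->.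
  apply/and3P; split.
  - by rewrite size_mkseq.
  - apply/(sortedP 0%N) => i; rewrite size_mkseq => hi.
    have hi' : (i < r)%N by apply: ltnW.
    rewrite -[i]/(val (Ordinal hi')) -[i.+1]/(val (Ordinal hi)) !nth_tl.
    by move/forallP: (dec (Ordinal hi')) => /(_ (Ordinal hi)) /implyP; apply.
  - apply/allP => v /mapP [i]; rewrite mem_iota add0n => hi ->.
    rewrite -[i]/(val (Ordinal hi)) lfE pos /=.
    by rewrite -ltnS ltn_ord.
move=> /and3P [/eqP sz srt al].
have hn : forall i, (nth 0 s i <= n)%N.
  move=> i; case: (ltnP i (size s)) => hi; last by rewrite nth_default.
  by move/allP: al => /(_ _ (mem_nth 0%N hi)) /andP [].
apply/mapP; exists [ffun i : 'I_r => (inord (nth 0%N s i) : 'I_n.+1)].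
  rewrite mem_filter mem_index_enum andbT; apply/andP; split.
    apply/forallP => i; rewrite ffunE.
    rewrite /= inordK ?ltnS ?hn //.
    have hi : (i < size s)%N by rewrite sz.
    by move/allP: al => /(_ _ (mem_nth 0%N hi)) /andP [].
  apply/forallP => i; apply/forallP => j; apply/implyP => ij.
  rewrite !ffunE /= !inordK ?ltnS ?hn //.
  apply: (sorted_leq_nth geq_tr _ 0%N srt) => //.
  - by move=> a; exact: leqnn.
  - by rewrite inE sz.
  - by rewrite inE sz.
apply: (@eq_from_nth _ 0%N); first by rewrite size_mkseq sz.
move=> i; rewrite sz => hi.
by rewrite -[i]/(val (Ordinal hi)) nth_tl ffunE /= inordK // ltnS hn.
Qed.
End Bridge.
End P1.

Theorem mainTheorem11 (R : numFieldType) (n r : nat) (x : nat -> R)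
    (hx0 : x 0%N = 0) :
  \sum_(lam : {ffun 'I_r -> 'I_n.+1} | is_part_rn lam)
     ((\prod_(1 <= j < n.+1) ((mult_part lam j)`!%:R)^-1) *
      \prod_(i < r) ((n%:R - (val (lam i))%:R - (i.+1)%:R + 2%:R) *
                     (x (val (lam i)) - x (val (lam i)).-1)))
  = elem_sym n r x.
Proof.
have -> : \sum_(lam : {ffun 'I_r -> 'I_n.+1} | is_part_rn lam)
     ((\prod_(1 <= j < n.+1) ((mult_part lam j)`!%:R)^-1) *
      \prod_(i < r) ((n%:R - (val (lam i))%:R - (i.+1)%:R + 2%:R) *
                     (x (val (lam i)) - x (val (lam i)).-1)))
  = \sum_(lam <- filter (@is_part_rn n r) (index_enum _))
       @wt R n (@tl n r lam) * @ordf R x n%:R (@tl n r lam).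
  rewrite big_filter; apply: eq_bigr => lam _.
  rewrite /wt ordf_mkseq; congr (_ * _).
    by apply: eq_bigr => j _; rewrite mult_tl.
  by apply: eq_bigr => i _; rewrite lfE.
rewrite -(big_map (@tl n r) predT (fun s => @wt R n s * @ordf R x n%:R s)).
rewrite (perm_big (parts n r)); last first.
  apply: uniq_perm.
  - rewrite map_inj_uniq; last exact: tl_inj.
    by rewrite filter_uniq // index_enum_uniq.
  - exact: uniq_parts.
  by move=> s; rewrite mem_tl mem_parts.
have := @Gmain R n x hx0 n (leqnn n) n r (leqnn n).
rewrite /G subnn cats0 => ->.
by rewrite elem_E.
Qed.
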